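(* Let $D:V\to\mathbb{N}$ be a pebble distribution on the infinite square grid (vertex set $\mathbb{Z}^2$, with $u,v$ adjacent iff they differ by $1$ in exactly one coordinate) such that $W_D(u)\ge 1$ for every vertex $u$. If a vertex $v$ satisfies $D(v)=k\ge 1$, then the excess weight at $v$ satisfies $\widehat W_D(v)\ge \frac{12}{25}k$.
   Context: For a distribution $D$, the weight function is $W_D(u)=\sum_{w}D(w)2^{-d(u,w)}$, where $d$ is graph distance (here the $\ell_1$ distance on $\mathbb{Z}^2$). The excess weight is $\widehat W_D(u)=W_D(u)-1$ if $W_D(u)>1$ and $\widehat W_D(u)=W_D(u)$ if $W_D(u)\le 1$. *)

(* Defs.v *)
From mathcomp Require Import all_boot all_order all_algebra.
From mathcomp Require Import all_classical all_reals all_analysis.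
Set Implicit Arguments. Unset Strict Implicit. Unset Printing Implicit Defensive.
Import Order.TTheory GRing.Theory Num.Theory.
Local Open Scope classical_set_scope.
Local Open Scope ring_scope.

Definition vertex := (int * int)%type.

(* Graph distance on the square grid = l1 distance. *)
Definition grid_dist (u w : vertex) : nat := (`|u.1 - w.1|%N + `|u.2 - w.2|%N)%N.

Definition weight (R : realType) (D : vertex -> nat) (u : vertex) : \bar R :=
  \esum_(w in [set: vertex]) (((D w)%:R * (2^-1) ^+ grid_dist u w : R)%:E).

Definition excess_weight (R : realType) (D : vertex -> nat) (u : vertex) : \bar R :=
  if (1%:E < weight R D u)%E then (weight R D u - 1%:E)%E else weight R D u.

(* Main.v *)
Require Import Defs.
From mathcomp Require Import all_boot all_order all_algebra.
From mathcomp Require Import all_classical all_reals all_analysis.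
From mathcomp Require Import ring lra zify.
Import Order.TTheory GRing.Theory Num.Theory.
Local Open Scope ring_scope.

Lemma key1 (R : realType) (a : int) :
  (2^-1 : R) ^+ absz (a - 1) + (2^-1) ^+ absz (a + 1) =
  (if a == 0 then 1 else 5/2) * (2^-1) ^+ absz a.
Proof.
case: a => n.
- case: n => [|n]. by rewrite /= expr1 expr0; lra.
  have -> : absz (Posz n.+1 - 1) = n by lia.
  have -> : absz (Posz n.+1 + 1) = n.+2 by lia.
  rewrite !exprS /=. lra.
- have -> : absz (Negz n - 1) = n.+2 by lia.
  have -> : absz (Negz n + 1) = n by lia.
  have -> : absz (Negz n) = n.+1 by lia.
  rewrite !exprS /=. lra.
Qed.

Lemma esum_natmul (R : realType) (T : choiceType) (r : T -> R) (n : nat) :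
  (forall i, 0 <= r i) ->
  (\esum_(i in [set: T]) (n%:R * r i)%:E = n%:R%:E * \esum_(i in [set: T]) (r i)%:E)%E.
Proof.
move=> r0; elim: n => [|n IH].
  rewrite mul0e; apply: esum1 => i _; by rewrite mul0r.
under eq_esum => i _ do rewrite -addn1 natrD mulrDl mul1r EFinD.
rewrite esumD; last 2 first.
- by move=> i _; rewrite lee_fin mulr_ge0.
- by move=> i _; rewrite lee_fin.
rewrite IH -addn1 natrD EFinD ge0_muleDl ?lee_fin // mul1e addeC.
by [].
Qed.

Lemma esum_delta (R : realType) (v : vertex) (c : R) : 0 <= c ->
  (\esum_(w in [set: vertex]) (if w == v then c else 0)%:E = c%:E)%E.
Proof.
move=> c0; rewrite -(@esum_set1 R vertex v (fun _ => c%:E)) ?lee_fin // [RHS]esum_mkcond.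
apply: eq_esum => w _; case: (eqVneq w v) => [->|nwv].
  by rewrite mem_set.
rewrite memNset //=; exact/eqP.
Qed.
Definition Fw (R : realType) (D : vertex -> nat) (u w : vertex) : R :=
  (D w)%:R * (2^-1) ^+ grid_dist u w.

Lemma Fw_ge0 (R : realType) D u w : 0 <= Fw R D u w.
Proof. by rewrite /Fw mulr_ge0 // exprn_ge0 // invr_ge0. Qed.

Lemma Fw_shift (R : realType) D (v w : vertex) (s t : int) :
  Fw R D (v.1 + s, v.2 + t) w =
  (D w)%:R * ((2^-1) ^+ absz (v.1 - w.1 + s) * (2^-1) ^+ absz (v.2 - w.2 + t)).
Proof.
rewrite /Fw -exprD; congr (_ * _ ^+ _); rewrite /grid_dist /=; lia.
Qed.

Lemma pointwise (R : realType) D (v w : vertex) (k : nat) (hDv : D v = k) :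
  4 * (Fw R D (v.1 + 1, v.2 + 1) w + Fw R D (v.1 + 1, v.2 + -1) w
      + Fw R D (v.1 + -1, v.2 + 1) w + Fw R D (v.1 + -1, v.2 + -1) w)
  + (if w == v then 21 * k%:R else 0) <= 25 * Fw R D v w.
Proof.
rewrite !Fw_shift.
set a := v.1 - w.1. set b := v.2 - w.2.
set h := (2^-1 : R).
have E : (D w)%:R * (h ^+ absz (a + 1) * h ^+ absz (b + 1)) +
   (D w)%:R * (h ^+ absz (a + 1) * h ^+ absz (b + -1)) +
   (D w)%:R * (h ^+ absz (a + -1) * h ^+ absz (b + 1)) +
   (D w)%:R * (h ^+ absz (a + -1) * h ^+ absz (b + -1)) =
   (D w)%:R * ((h ^+ absz (a - 1) + h ^+ absz (a + 1)) *
               (h ^+ absz (b - 1) + h ^+ absz (b + 1))) by ring.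
rewrite E !key1.
have FE : Fw R D v w = (D w)%:R * (h ^+ absz a * h ^+ absz b).
  rewrite /Fw -exprD; congr (_ * _ ^+ _); rewrite /grid_dist /a /b /=; lia.
rewrite FE.
have ha : 0 <= h ^+ absz a by rewrite exprn_ge0 // invr_ge0.
have hb : 0 <= h ^+ absz b by rewrite exprn_ge0 // invr_ge0.
have hd : 0 <= (D w)%:R :> R by [].
case: (eqVneq w v) => [wv|nwv].
  have -> : a = 0 by rewrite /a wv subrr.
  have -> : b = 0 by rewrite /b wv subrr.
  rewrite wv hDv /= expr0; lra.
rewrite addr0.
set x := (D w)%:R * (h ^+ absz a * h ^+ absz b).
have x0 : 0 <= x by rewrite /x mulr_ge0 // mulr_ge0.
have -> : (D w)%:R * ((if a == 0 then 1 else 5 / 2) * h ^+ absz a *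
      ((if b == 0 then 1 else 5 / 2) * h ^+ absz b)) =
   (if a == 0 then 1 else 5 / 2) * (if b == 0 then 1 else 5 / 2) * x
   by rewrite /x; ring.
by case: (a == 0); case: (b == 0); lra.
Qed.

Theorem mainTheorem5 (R : realType) (D : vertex -> nat)
  (hW : forall u : vertex, (1%:E <= weight R D u)%E)
  (v : vertex) (k : nat) (hk : (1 <= k)%N) (hDv : D v = k) :
  (((12 / 25 : R) * k%:R)%:E <= excess_weight R D v)%E.
Proof.
set u1 := (v.1 + 1, v.2 + 1). set u2 := (v.1 + 1, v.2 + -1).
set u3 := (v.1 + -1, v.2 + 1). set u4 := (v.1 + -1, v.2 + -1).
have Wdef : forall u, weight R D u = (\esum_(w in [set: vertex]) (Fw R D u w)%:E)%E
  by [].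
have key : ((4%:R)%:E * (weight R D u1 + weight R D u2 + weight R D u3 + weight R D u4)
   + (21 * k%:R)%:E <= (25%:R)%:E * weight R D v)%E.
  rewrite !Wdef -!esumD; try (by move=> i _; rewrite -?EFinD lee_fin ?addr_ge0 ?Fw_ge0).
  under eq_esum => i _ do rewrite -!EFinD.
  rewrite -esum_natmul; last first.
    by move=> i; rewrite !addr_ge0 ?Fw_ge0.
  rewrite -esum_natmul; last by move=> i; apply: Fw_ge0.
  rewrite -(@esum_delta R v (21 * k%:R)); last by rewrite mulr_ge0.
  rewrite -esumD; last 2 first.
  - by move=> i _; rewrite lee_fin mulr_ge0 // !addr_ge0 ?Fw_ge0.
  - by move=> i _; rewrite lee_fin; case: ifP => // _; rewrite mulr_ge0.
  apply: le_esum => w _; rewrite -EFinD lee_fin.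
  exact: (@pointwise R D v w k hDv).
have h1 := hW u1. have h2 := hW u2. have h3 := hW u3. have h4 := hW u4.
have hv := hW v.
rewrite /excess_weight.
move: key h1 h2 h3 h4 hv.
case: (weight R D v) => [r| |] key h1 h2 h3 h4 hv; last by [].
- have S4 : (4%:E <= weight R D u1 + weight R D u2 + weight R D u3 + weight R D u4)%E.
    have -> : (4%:E = 1%:E + 1%:E + 1%:E + 1%:E :> \bar R)%E by rewrite -!EFinD; congr (_%:E); lra.
    by rewrite !leeD.
  have : ((4%:R * 4%:R + 21 * k%:R)%:E <= (25%:R * r)%:E :> \bar R)%E.
    apply: le_trans key; rewrite EFinD leeD2r // EFinM.
    by apply: lee_pmul => //; rewrite lee_fin.
  rewrite lee_fin => Hr.
  have kR : (1 <= k%:R :> R) by rewrite ler1n.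
  have -> : (1%:E < r%:E :> \bar R)%E by rewrite lte_fin; lra.
  rewrite -EFinB lee_fin; lra.
- have -> : (1%:E < +oo :> \bar R)%E by rewrite ltry.
  by rewrite leey.
Qed.
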